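(* Let $l_1,u_1,l_2,u_2$ be non-negative integers and $(f(k))$, $(g(k))$ complex sequences such that $\sum_{k=l_1}^{u_1}f(k)(1-t)^k=\sum_{k=l_2}^{u_2}g(k)t^k$ for all complex $t$. Let $s\in\mathbb{C}\setminus\mathbb{Z}^{-}$, $s\ne0$. Then \[ \sum_{k=l_1}^{u_1}\frac{f(k)}{\binom{k+s}{s}}=\sum_{k=l_2}^{u_2}\frac{g(k)s}{k+s},\qquad \sum_{k=l_1}^{u_1}\frac{f(k)}{k+1}=\sum_{k=l_2}^{u_2}\frac{g(k)}{k+1}, \] \[ \sum_{k=l_1}^{u_1}f(k)\frac{H_s-H_k}{\binom{k+s}{s}}=\sum_{k=l_2}^{u_2}g(k)\frac{s+1}{k+s}+\sum_{k=l_2}^{u_2}g(k)s\frac{H_{k+s-1}-1}{k+s}, \] \[ \sum_{k=l_1}^{u_1}f(k)\frac{1-H_k}{k+1}=\sum_{k=l_2}^{u_2}g(k)\frac{2}{k+1}+\sum_{k=l_2}^{u_2}g(k)\frac{H_k-1}{k+1}. \]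
   Context: $\mathbb{Z}^{-}$ denotes the set of negative integers. For complex $z$ not a negative integer, $H_z=\psi(z+1)+\gamma$; for integers $m\ge0$, $H_m=\sum_{j=1}^m1/j$. Binomial coefficients with complex entries: $\binom{x}{y}=\frac{\Gamma(x+1)}{\Gamma(y+1)\Gamma(x-y+1)}$. *)

(* Defs.v *)
From HB Require Import structures.
From mathcomp Require Import all_boot all_order all_algebra.
From mathcomp Require Export complex.
From mathcomp Require Export all_classical all_reals all_analysis.
Set Implicit Arguments. Unset Strict Implicit. Unset Printing Implicit Defensive.
Import Order.TTheory GRing.Theory Num.Theory.
Import numFieldNormedType.Exports.
Local Open Scope ring_scope.
Local Open Scope complex_scope.

HB.instance Definition _ (R : realType) :=
  NormedModule.copy R[i] (R[i] : numClosedFieldType)^o.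

Definition harm (R : realType) (m : nat) : R[i] :=
  \sum_(1 <= j < m.+1) (j%:R)^-1.

(* H_z for complex z not a negative integer: H_z = psi(z+1) + gamma,
   written via the standard series  psi(z+1) + gamma = sum_{n>=1} (1/n - 1/(n+z)). *)
Definition harmC (R : realType) (z : R[i]) : R[i] :=
  limn (series (fun n : nat => (n.+1%:R)^-1 - (n.+1%:R + z)^-1)).

(* binom(k+s, s) = Gamma(k+s+1) / (Gamma(s+1) Gamma(k+1)), k a natural number;
   by Gamma(x+1) = x Gamma(x) this is prod_{j=1}^k (s+j)/j. *)
Definition binomC (R : realType) (s : R[i]) (k : nat) : R[i] :=
  \prod_(1 <= j < k.+1) ((s + j%:R) / j%:R).

(* Main.v *)
Require Import Defs.
From HB Require Import structures.
From mathcomp Require Import all_boot all_order all_algebra.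
From mathcomp Require Import complex.
From mathcomp Require Import all_classical all_reals all_analysis.
From mathcomp Require Import ring lra.
Import Order.TTheory GRing.Theory Num.Theory.
Import numFieldNormedType.Exports.
Local Open Scope ring_scope.
Local Open Scope complex_scope.
Set Implicit Arguments. Unset Strict Implicit.
Section Alg.
Variable R : realType.
Notation C := (R[i]).
Implicit Types (p q : {poly C}) (w : nat -> C).

Lemma poly_eq_fun p q : (forall t, p.[t] = q.[t]) -> p = q.
Proof.
move=> H; apply/eqP; rewrite -subr_eq0; apply/negPn/negP => nz.
have := max_poly_roots nz (rs := [seq i%:R | i <- iota 0 (size (p - q))]).
rewrite size_map size_iota ltnn => /(_ _ _)/implyP; apply => //.
  by apply/allP => x _; rewrite /root hornerD hornerN H subrr.
rewrite map_inj_uniq ?iota_uniq // => i j /eqP; rewrite eqr_nat => /eqP.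
done.
Qed.

Definition Lw w p := \sum_(i < size p) p`_i * w i.

Lemma LwE w p n : (size p <= n)%N -> Lw w p = \sum_(i < n) p`_i * w i.
Proof.
move=> le; rewrite /Lw (big_ord_widen n (fun i => p`_i * w i) le) big_mkcond /=.
apply: eq_bigr => i _; case: ifP => // /negbT; rewrite -leqNgt => h.
by rewrite nth_default // mul0r.
Qed.

Lemma LwD w p q : Lw w (p + q) = Lw w p + Lw w q.
Proof.
rewrite (@LwE w _ _ (leq_trans (size_polyD p q) (leqnn _))).
rewrite (@LwE w _ _ (leq_maxl (size p) (size q))) (@LwE w _ _ (leq_maxr (size p) (size q))).
by rewrite -big_split; apply: eq_bigr => i _; rewrite coefD mulrDl.
Qed.

Lemma Lw0 w : Lw w 0 = 0.
Proof. by rewrite /Lw size_poly0 big_ord0. Qed.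

Lemma LwZ w c p : Lw w (c *: p) = c * Lw w p.
Proof.
rewrite (@LwE w _ _ (size_scale_leq c p)) mulr_sumr.
by apply: eq_bigr => i _; rewrite coefZ mulrA.
Qed.

Lemma LwB w p q : Lw w (p - q) = Lw w p - Lw w q.
Proof. by rewrite LwD -scaleN1r LwZ mulN1r. Qed.

Lemma Lw_sum w (I : Type) (r : seq I) (P : pred I) (F : I -> {poly C}) :
  Lw w (\sum_(i <- r | P i) F i) = \sum_(i <- r | P i) Lw w (F i).
Proof. exact: (big_morph (Lw w) (LwD w) (Lw0 w)). Qed.

Lemma LwXn w k : Lw w 'X^k = w k.
Proof.
rewrite /Lw size_polyXn big_ord_recr /= coefXn eqxx mul1r.
by rewrite big1 ?add0r // => i _; rewrite coefXn ltn_eqF ?mul0r.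
Qed.

Lemma LwX w p : Lw w ('X * p) = Lw (fun i => w i.+1) p.
Proof.
rewrite (@LwE w _ (size p).+1); last first.
  by apply: leq_trans (size_polyMleq _ _) _; rewrite size_polyX.
rewrite big_ord_recl coefXM /= mul0r add0r.
by apply: eq_bigr => i _; rewrite coefXM.
Qed.

Lemma Lw_lin w1 w2 a b p :
  Lw (fun i => a * w1 i + b * w2 i) p = a * Lw w1 p + b * Lw w2 p.
Proof.
by rewrite /Lw !mulr_sumr -big_split; apply: eq_bigr => i _ /=; ring.
Qed.

Lemma Lw_ext w1 w2 p : (forall i, w1 i = w2 i) -> Lw w1 p = Lw w2 p.
Proof. by move=> h; apply: eq_bigr => i _; rewrite h. Qed.

End Alg.
Section Alg2.
Variable R : realType.
Notation C := (R[i]).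
Implicit Types (p q : {poly C}) (w : nat -> C) (s : C).

Lemma transfer (l1 u1 l2 u2 : nat) (f g : nat -> C)
  (hfg : forall t : C,
     \sum_(l1 <= k < u1.+1) f k * (1 - t) ^+ k
     = \sum_(l2 <= k < u2.+1) g k * t ^+ k) w h :
  (forall k, Lw w ((1 - 'X) ^+ k) = h k) ->
  \sum_(l1 <= k < u1.+1) f k * h k = \sum_(l2 <= k < u2.+1) g k * w k.
Proof.
move=> hw.
have P : \sum_(l1 <= k < u1.+1) f k *: (1 - 'X) ^+ k
       = \sum_(l2 <= k < u2.+1) g k *: 'X^k :> {poly C}.
  apply: poly_eq_fun => t; rewrite !horner_sum.
  transitivity (\sum_(l1 <= k < u1.+1) f k * (1 - t) ^+ k).
    by apply: eq_bigr => k _; rewrite hornerZ horner_exp !hornerE.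
  rewrite hfg; apply: eq_bigr => k _.
  by rewrite hornerZ hornerXn.
have := congr1 (Lw w) P; rewrite !Lw_sum => E.
transitivity (\sum_(l1 <= i < u1.+1) Lw w (f i *: (1 - 'X) ^+ i)).
  by apply: eq_bigr => k _; rewrite LwZ hw.
by rewrite E; apply: eq_bigr => k _; rewrite LwZ LwXn.
Qed.

Definition adm s := forall n : nat, s + n%:R != 0.

Lemma Bsucc s k : binomC s k.+1 = binomC s k * ((s + k.+1%:R) / k.+1%:R).
Proof. by rewrite /binomC big_nat_recr. Qed.

Lemma B0 s : binomC s 0 = 1.
Proof. by rewrite /binomC big_geq. Qed.

Lemma Bshift s k : binomC (s + 1) k * (s + 1) = binomC s k * (s + k.+1%:R).
Proof.
elim: k => [|k IH]; first by rewrite !B0 !mul1r.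
rewrite !Bsucc mulrAC IH.
have -> : s + 1 + k.+1%:R = s + k.+2%:R by ring.
ring.
Qed.

Lemma Bneq0 s k : adm s -> binomC s k != 0.
Proof.
move=> hs; rewrite /binomC; rewrite prodf_seq_neq0; apply/allP => j.
rewrite mem_index_iota => /andP[j1 _]; apply/implyP => _.
rewrite mulf_neq0 ?invr_eq0 ?hs // pnatr_eq0 -lt0n //.
Qed.

Lemma adm1 s : adm s -> adm (s + 1).
Proof. by move=> hs n; have -> : s + 1 + n%:R = s + n.+1%:R by ring. Qed.

End Alg2.
Section Key.
Variable R : realType.
Notation C := (R[i]).
Implicit Types (p q : {poly C}) (w : nat -> C) (s : C).

Definition W s (i : nat) := s / (i%:R + s).
Definition M s (i : nat) := - (s / (i%:R + s)) * \sum_(j < i) (s + j%:R)^-1.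

Lemma adm_ne s n : adm s -> n%:R + s != 0.
Proof. by move=> hs; rewrite addrC hs. Qed.

Lemma Lw1 w : Lw w (1 : {poly C}) = w 0%N.
Proof. by have := LwXn w 0; rewrite expr0. Qed.

Lemma K1 k s : adm s -> Lw (W s) ((1 - 'X) ^+ k) = (binomC s k)^-1.
Proof.
elim: k s => [|k IH] s hs.
  have s0 : s != 0 by have := hs 0%N; rewrite addr0.
  by rewrite expr0 Lw1 /W B0 invr1 add0r divff.
have s1 : s + 1 != 0 by have := hs 1%N.
have e : forall i, W s i.+1 = s/(s+1) * W (s+1) i + 0 * W (s+1) i.
  move=> i; rewrite /W mul0r addr0.
  have h1 := adm_ne i.+1 hs.
  have h2 := adm_ne i (adm1 hs).
  field.
  by rewrite ?h1 ?h2 ?s1.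
rewrite GRing.exprS mulrBl mul1r LwB LwX (Lw_ext _ e) Lw_lin mul0r addr0.
rewrite !IH //; last exact: adm1.
have hB := Bneq0 k hs.
have hk : s + k.+1%:R != 0 by [].
have hk1 : k.+1%:R != 0 :> C by rewrite pnatr_eq0.
have E : binomC (s+1) k = binomC s k * (s + k.+1%:R) / (s+1) by rewrite -Bshift mulfK.
rewrite E Bsucc.
have e1 : 1 + k%:R = k.+1%:R :> C by ring.
by field; rewrite e1 hk1 hk hB s1.
Qed.

Lemma harmS k : harm R k.+1 = harm R k + (k.+1%:R)^-1.
Proof. by rewrite /harm big_nat_recr. Qed.

Lemma harm0 : harm R 0 = 0.
Proof. by rewrite /harm big_geq. Qed.

Lemma K2 k s : adm s -> Lw (M s) ((1 - 'X) ^+ k) = harm R k / binomC s k.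
Proof.
elim: k s => [|k IH] s hs.
  by rewrite expr0 Lw1 /M big_ord0 mulr0 harm0 mul0r.
have s0 : s != 0 by have := hs 0%N; rewrite addr0.
have s1 : s + 1 != 0 by have := hs 1%N.
have e : forall i, M s i.+1 = (- (s+1)^-1) * W (s+1) i + s/(s+1) * M (s+1) i.
  move=> i; rewrite /M /W big_ord_recl /=.
  have -> : \sum_(j < i) (s + (bump 0 j)%:R)^-1 = \sum_(j < i) (s + 1 + j%:R)^-1.
    by apply: eq_bigr => j _; congr (_^-1); rewrite /bump /=; ring.
  set D := \sum_(j < i) _.
  have h1 := adm_ne i.+1 hs.
  have h2 := adm_ne i (adm1 hs).
  rewrite addr0.
  field.
  by rewrite ?h1 ?h2 ?s1 ?s0.
rewrite GRing.exprS mulrBl mul1r LwB LwX (Lw_ext _ e) Lw_lin.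
rewrite IH // K1; last exact: adm1.
rewrite IH; last exact: adm1.
have hB := Bneq0 k hs.
have hk : s + k.+1%:R != 0 by [].
have hk1 : k.+1%:R != 0 :> C by rewrite pnatr_eq0.
have E : binomC (s+1) k = binomC s k * (s + k.+1%:R) / (s+1) by rewrite -Bshift mulfK.
rewrite E Bsucc harmS.
have e1 : 1 + k%:R = k.+1%:R :> C by ring.
by field; rewrite e1 hk1 hk hB s1.
Qed.

End Key.
Section Ana.
Local Open Scope classical_set_scope.
Variable R : realType.
Notation C := (R[i]).
Implicit Types (x y w : C).

Definition nrm (w : C) : R := complex.Re `|w|.

Lemma nrmE w : `|w| = (nrm w)%:C.
Proof. by rewrite /nrm normc_def. Qed.

Lemma nrm_ge0 w : 0 <= nrm w.
Proof. by have := normr_ge0 w; rewrite nrmE ler0c. Qed.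

Lemma nrmD x y : nrm (x + y) <= nrm x + nrm y.
Proof. by have := ler_normD x y; rewrite !nrmE -rmorphD lecR. Qed.

Lemma nrmM x y : nrm (x * y) = nrm x * nrm y.
Proof. by apply: complexI; rewrite rmorphM -!nrmE normrM. Qed.

Lemma nrmV x : nrm (x^-1) = (nrm x)^-1.
Proof. by apply: complexI; rewrite fmorphV -!nrmE normfV. Qed.

Lemma nrmN x : nrm (- x) = nrm x.
Proof. by rewrite /nrm normrN. Qed.

Lemma nrm_nat n : nrm (n%:R) = n%:R.
Proof. by apply: complexI; rewrite -nrmE normr_nat rmorph_nat. Qed.

Lemma nrm_real (r : R) : nrm (r%:C) = `|r|.
Proof. by rewrite /nrm normc_def /= expr0n addr0 sqrtr_sqr. Qed.

Lemma nrm0 x : nrm x = 0 -> x = 0.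
Proof. by move=> h; apply/eqP; rewrite -normr_eq0 nrmE h. Qed.

Lemma Re_le w : `|complex.Re w| <= nrm w.
Proof.
rewrite /nrm normc_def /= -sqrtr_sqr ler_sqrt ?lerDl ?sqr_ge0 //.
by rewrite addr_ge0 ?sqr_ge0.
Qed.

Lemma Im_le w : `|complex.Im w| <= nrm w.
Proof.
rewrite /nrm normc_def /= -sqrtr_sqr ler_sqrt ?lerDr ?sqr_ge0 //.
by rewrite addr_ge0 ?sqr_ge0.
Qed.

Lemma ReD x y : complex.Re (x + y) = complex.Re x + complex.Re y.
Proof. by case: x; case: y. Qed.

Lemma ImD x y : complex.Im (x + y) = complex.Im x + complex.Im y.
Proof. by case: x; case: y. Qed.

Lemma Re_sum n (F : nat -> C) : complex.Re (\sum_(k < n) F k) = \sum_(k < n) complex.Re (F k).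
Proof. by elim: n => [|n IH]; rewrite ?big_ord0 // !big_ord_recr ReD IH. Qed.

Lemma Im_sum n (F : nat -> C) : complex.Im (\sum_(k < n) F k) = \sum_(k < n) complex.Im (F k).
Proof. by elim: n => [|n IH]; rewrite ?big_ord0 // !big_ord_recr ImD IH. Qed.

Lemma cvg_realC (x : nat -> R) (a : R) :
  x @ \oo --> a -> (fun n => (x n)%:C : C) @ \oo --> a%:C.
Proof.
move=> hx; apply/cvgrPdist_lt => e; rewrite ltcE /= => /andP[/eqP Ime Ree].
move/cvgrPdist_lt: hx => /(_ (complex.Re e) Ree).
apply: filterS => n hn.
rewrite -rmorphB nrmE nrm_real ltcE /= Ime eqxx /=.
exact: hn.
Qed.

End Ana.
Section Ana2.
Local Open Scope classical_set_scope.
Variable R : realType.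
Notation C := (R[i]).

Lemma cvgC (u : nat -> C) (a b : R) :
  (fun n => complex.Re (u n)) @ \oo --> a ->
  (fun n => complex.Im (u n)) @ \oo --> b ->
  u @ \oo --> a%:C + 'i * b%:C.
Proof.
move=> ha hb.
have -> : u = fun n => (complex.Re (u n))%:C + 'i * (complex.Im (u n))%:C.
  by apply: funext => n; rewrite -complexE.
apply: cvgD; first exact: cvg_realC.
by apply: cvgMl_tmp; exact: cvg_realC.
Qed.

Lemma real_abs_cvg (x : nat -> R) (M : R) :
  (forall N, \sum_(n < N) `|x n| <= M) -> cvgn (series x).
Proof.
move=> hM; apply: (normed_cvg (V := R)).
apply: nondecreasing_is_cvgn.
  by apply: nondecreasing_series => n _ _; exact: normr_ge0.
exists M => _ [n _ <-].
by rewrite /= seriesEord /=; exact: hM.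
Qed.

Lemma abs_cvg (u : nat -> C) (M : R) :
  (forall N, \sum_(n < N) nrm (u n) <= M) -> cvgn (series u).
Proof.
move=> hM.
have hre : cvgn (series (fun n => complex.Re (u n))).
  apply: (real_abs_cvg (M := M)) => N.
  by apply: le_trans (hM N); apply: ler_sum => i _; exact: Re_le.
have him : cvgn (series (fun n => complex.Im (u n))).
  apply: (real_abs_cvg (M := M)) => N.
  by apply: le_trans (hM N); apply: ler_sum => i _; exact: Im_le.
apply/cvg_ex; eexists; apply: cvgC.
  have -> : (fun n => complex.Re (series u n)) = series (fun n => complex.Re (u n)).
    by apply: funext => n; rewrite !seriesEord /= Re_sum.
  exact: hre.
have -> : (fun n => complex.Im (series u n)) = series (fun n => complex.Im (u n)).
  by apply: funext => n; rewrite !seriesEord /= Im_sum.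
exact: him.
Qed.

End Ana2.
Section Ana3.
Local Open Scope classical_set_scope.
Variable R : realType.
Notation C := (R[i]).

Definition ha (z : C) := fun n : nat => (n.+1%:R)^-1 - (n.+1%:R + z)^-1.

Lemma nrm00 : nrm (0 : C) = 0.
Proof. by have := nrm_nat R 0. Qed.

Lemma term_bound (z : C) n (N0 : nat) : 2 * nrm z < N0%:R -> (N0 <= n)%N ->
  nrm (ha z n) <= 4 * nrm z * ((n.+1%:R)^-1 - (n.+2%:R)^-1).
Proof.
move=> hN hn.
have c0 := nrm_ge0 z.
have hm : N0%:R <= n.+1%:R :> R by rewrite ler_nat; apply: leq_trans hn _.
have hw : n.+1%:R - nrm z <= nrm (n.+1%:R + z).
  have := nrmD (n.+1%:R + z) (- z); rewrite addrK nrm_nat nrmN; lra.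
have wpos : 0 < nrm (n.+1%:R + z) by lra.
have w0 : (n.+1%:R + z) != 0.
  by apply/eqP => h; move: wpos; rewrite h nrm00 ltxx.
have n0 : n.+1%:R != 0 :> C by rewrite pnatr_eq0.
have e : ha z n = z * ((n.+1%:R)^-1 * (n.+1%:R + z)^-1).
  have e1 : 1 + n%:R = n.+1%:R :> C by ring.
  by rewrite /ha; field; rewrite e1 w0 n0.
rewrite e !nrmM !nrmV nrm_nat.
set W := nrm (n.+1%:R + z) in hw wpos *.
set m : R := n.+1%:R in hm hw *.
have -> : n.+2%:R = m + 1 :> R by rewrite /m natr1.
have mpos : 0 < m by rewrite /m ltr0n.
have m1 : 1 <= m by rewrite /m ler1n.
have -> : m^-1 - (m + 1)^-1 = m^-1 * (m + 1)^-1.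
  by field; apply/andP; split; rewrite lt0r_neq0 //; lra.
rewrite -mulrA [4 * _]mulrCA; apply: ler_wpM2l => //.
rewrite [4 * _]mulrCA; apply: ler_wpM2l; first by rewrite invr_ge0 ltW.
have -> : 4 * (m + 1)^-1 = ((m + 1) / 4)^-1 by rewrite invf_div mulrC.
rewrite lef_pV2 ?posrE; lra.
Qed.

End Ana3.
Section Ana4.
Local Open Scope classical_set_scope.
Variable R : realType.
Notation C := (R[i]).

Lemma harm_cvg (z : C) : cvgn (series (ha z)).
Proof.
set c := nrm z.
have c0 : 0 <= c := nrm_ge0 z.
have [N0 hN0] : exists N0 : nat, 2 * c < N0%:R.
  by exists (Num.Def.archi_bound (2 * c)); apply: archi_boundP; lra.
set v := fun n : nat => (n.+1%:R : R)^-1.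
apply: (abs_cvg (M := \sum_(0 <= n < N0) nrm (ha z n) + 4 * c)) => N.
rewrite -(big_mkord xpredT (fun n => nrm (ha z n))).
have h1 : \sum_(0 <= n < N) nrm (ha z n) <= \sum_(0 <= n < N0 + N) nrm (ha z n).
  rewrite (big_cat_nat (leq0n N) (leq_addl N0 N)) /= lerDl.
  by apply: sumr_ge0 => i _; exact: nrm_ge0.
apply: le_trans h1 _.
rewrite (big_cat_nat (leq0n N0) (leq_addr N N0)) /= lerD2l.
have h3 : \sum_(N0 <= n < N0 + N) nrm (ha z n)
          <= \sum_(N0 <= n < N0 + N) - (4 * c) * (v n.+1 - v n).
  apply: ler_sum_nat => i /andP[hi _].
  rewrite mulNr -mulrN opprB; exact: term_bound hN0 hi.
apply: le_trans h3 _.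
rewrite -mulr_sumr telescope_sumr ?leq_addr //.
have hv1 : v N0 <= 1 by rewrite /v invf_le1 ?ler1n ?ltr0n.
have hv0 : 0 <= v (N0 + N)%N by rewrite /v invr_ge0 ler0n.
nra.
Qed.

Lemma harm_series_shift (z : C) N :
  series (ha (z + 1)) N = series (ha z) N + ((1 + z)^-1 - (N.+1%:R + z)^-1).
Proof.
elim: N => [|N IH].
  by rewrite /series /= !big_geq // subrr addr0.
rewrite !seriesSr IH /ha.
have -> : N.+1%:R + (z + 1) = N.+2%:R + z :> C by ring.
ring.
Qed.

Lemma harmC_shift (z : C) : harmC (z + 1) = harmC z + (z + 1)^-1.
Proof.
have hb : (fun N : nat => (N.+1%:R + z)^-1) @ \oo --> (0 : C).
  have hv : (fun N : nat => (N.+1%:R : C)^-1) @ \oo --> (0 : C).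
    have := cvg_realC (@cvg_harmonic R).
    have -> : (fun n => ((@harmonic R n))%:C) = (fun N : nat => (N.+1%:R : C)^-1).
      by apply: funext => n; rewrite /= fmorphV rmorph_nat.
    by [].
  have := cvgB hv (cvg_series_cvg_0 (harm_cvg (z:=z))).
  rewrite subr0.
  have -> : ((fun N : nat => (N.+1%:R : C)^-1) - ha z) = (fun N : nat => (N.+1%:R + z)^-1).
    by apply: funext => n; rewrite /ha !fctE opprB addrC subrK.
  by move=> h; apply: h.
have hg : ((fun _ : nat => (1 + z)^-1) - (fun N : nat => (N.+1%:R + z)^-1)) @ \oo --> (1 + z)^-1 - 0.
  exact: (cvgB (cvg_cst _) hb).
have E : series (ha (z + 1)) = series (ha z) + ((fun _ : nat => (1 + z)^-1) - (fun N : nat => (N.+1%:R + z)^-1)).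
  by apply: funext => N; rewrite !fctE -harm_series_shift.
change (limn (series (ha (z + 1))) = limn (series (ha z)) + (z + 1)^-1).
rewrite E limD; last 2 first.
- exact: (harm_cvg (z:=z)).
- by apply/cvg_ex; eexists; exact: hg.
rewrite (cvg_lim _ hg) // subr0 [1 + z]addrC.
reflexivity.
Qed.

Lemma harmC_shiftk (t : C) k :
  harmC (t + k%:R) = harmC t + \sum_(j < k) (t + j.+1%:R)^-1.
Proof.
elim: k => [|k IH]; first by rewrite addr0 big_ord0 addr0.
have -> : t + k.+1%:R = (t + k%:R) + 1 by ring.
rewrite harmC_shift IH big_ord_recr /= -addrA; congr (_ + (_ + _^-1)); ring.
Qed.

End Ana4.
Section Final.
Variable R : realType.
Notation C := (R[i]).

Lemma B1 k : binomC (1 : C) k = k.+1%:R.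
Proof.
elim: k => [|k IH]; first by rewrite B0.
rewrite Bsucc IH.
have hk1 : k.+1%:R != 0 :> C by rewrite pnatr_eq0.
have e1 : 1 + k%:R = k.+1%:R :> C by ring.
by field; rewrite e1 hk1.
Qed.

Lemma HH k : \sum_(j < k) (1 + j%:R)^-1 = harm R k.
Proof.
rewrite /harm big_add1 /= -(big_mkord xpredT (fun j => (1 + j%:R : C)^-1)).
by apply: eq_bigr => j _; rewrite -natr1 addrC.
Qed.

End Final.

Theorem corollary7 (R : realType) (l1 u1 l2 u2 : nat) (f g : nat -> R[i])
  (hfg : forall t : R[i],
     \sum_(l1 <= k < u1.+1) f k * (1 - t) ^+ k
     = \sum_(l2 <= k < u2.+1) g k * t ^+ k)
  (s : R[i]) (hsneg : forall n : nat, s != - (n.+1)%:R) (hs0 : s != 0) :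
  [/\ \sum_(l1 <= k < u1.+1) f k / binomC s k
        = \sum_(l2 <= k < u2.+1) g k * s / (k%:R + s),
      \sum_(l1 <= k < u1.+1) f k / (k.+1)%:R
        = \sum_(l2 <= k < u2.+1) g k / (k.+1)%:R,
      \sum_(l1 <= k < u1.+1) f k * (harmC s - harm R k) / binomC s k
        = \sum_(l2 <= k < u2.+1) g k * (s + 1) / (k%:R + s)
          + \sum_(l2 <= k < u2.+1) g k * s * (harmC (k%:R + s - 1) - 1) / (k%:R + s)
    & \sum_(l1 <= k < u1.+1) f k * (1 - harm R k) / (k.+1)%:R
        = \sum_(l2 <= k < u2.+1) g k * 2 / (k.+1)%:R
          + \sum_(l2 <= k < u2.+1) g k * (harm R k - 1) / (k.+1)%:R ].
Proof.
have adms : adm s.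
  by case=> [|n]; rewrite ?addr0 // addr_eq0 hsneg.
have adm1 : adm (1 : R[i]).
  by move=> n; have -> : 1 + n%:R = n.+1%:R :> R[i] by ring; rewrite pnatr_eq0.
have I1 := transfer hfg (fun k => K1 k adms).
have I2 := transfer hfg (fun k => K1 k adm1).
have IM := transfer hfg (fun k => K2 k adms).
have IM1 := transfer hfg (fun k => K2 k adm1).
have e2 : \sum_(l1 <= k < u1.+1) f k / (k.+1)%:R = \sum_(l2 <= k < u2.+1) g k / (k.+1)%:R.
  have -> : \sum_(l1 <= k < u1.+1) f k / (k.+1)%:R
           = \sum_(l1 <= k < u1.+1) f k * (binomC 1 k)^-1.
    by apply: eq_bigr => k _; rewrite B1.
  rewrite I2; apply: eq_bigr => k _; by rewrite /W mul1r natr1.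
split.
- rewrite I1; apply: eq_bigr => k _; by rewrite /W mulrA.
- exact: e2.
- have HC : forall k : nat, harmC (k%:R + s - 1) = harmC s - s^-1 + \sum_(j < k) (s + j%:R)^-1.
    move=> k; have := harmC_shiftk (s - 1) k.
    have -> : s - 1 + k%:R = k%:R + s - 1 by ring.
    move=> ->; have := harmC_shift (s - 1); rewrite subrK => ->.
    rewrite addrK; congr (_ + _); apply: eq_bigr => j _.
    by have -> : s - 1 + j.+1%:R = s + j%:R by ring.
  have -> : \sum_(l1 <= k < u1.+1) f k * (harmC s - harm R k) / binomC s k
         = harmC s * \sum_(l1 <= k < u1.+1) f k * (binomC s k)^-1
           - \sum_(l1 <= k < u1.+1) f k * (harm R k / binomC s k).
    by rewrite mulr_sumr -sumrB; apply: eq_bigr => k _; ring.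
  rewrite I1 IM mulr_sumr -sumrB -big_split; apply: eq_bigr => k _ /=.
  rewrite HC /W /M.
  have h1 := adm_ne k adms.
  by field; rewrite h1 hs0.
- have -> : \sum_(l1 <= k < u1.+1) f k * (1 - harm R k) / (k.+1)%:R
         = \sum_(l1 <= k < u1.+1) f k / (k.+1)%:R
           - \sum_(l1 <= k < u1.+1) f k * (harm R k / binomC 1 k).
    by rewrite -sumrB; apply: eq_bigr => k _; rewrite B1; ring.
  rewrite e2 IM1 -sumrB -big_split; apply: eq_bigr => k _ /=.
  rewrite /M HH.
  have h1 := adm_ne k adm1.
  have hk1 : k.+1%:R != 0 :> R[i] by rewrite pnatr_eq0.
  have e1 : k%:R + 1 = k.+1%:R :> R[i] by rewrite natr1.
  by field; rewrite addrC e1 hk1.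
Qed.
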